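(* Let $G=A(n,\theta)$ with $n\ge3$ odd, and let $x\in G$ have order $4$. Then $x^2\notin[x,G]$; consequently the image of $x$ in $G/[x,G]$ has order $4$.
   Context: Let $n=2m+1$ be odd, $\mathbb{F}_{2^n}$ the field with $2^n$ elements, $\theta$ a generator of $\mathrm{Gal}(\mathbb{F}_{2^n}/\mathbb{F}_2)$, $a^\theta$ the image of $a$ under $\theta$. $G=A(n,\theta)$ is the group of matrices $\begin{bmatrix}1&a&b\\0&1&a^\theta\\0&0&1\end{bmatrix}$, $a,b\in\mathbb{F}_{2^n}$, denoted $(a,b)$, with $(a,b)(c,d)=(a+c,\,b+d+ac^\theta)$. For $x\in G$, $[x,G]$ denotes the subgroup generated by all commutators $x^{-1}g^{-1}xg$, $g\in G$. *)

(* Defs.v *)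
From HB Require Import structures.
From mathcomp Require Import all_boot all_order all_algebra all_fingroup all_solvable all_field.
Set Implicit Arguments. Unset Strict Implicit. Unset Printing Implicit Defensive.
Import GRing.Theory.

Definition Amat (F : finFieldType) (theta : F -> F) (a b : F) : 'M[F]_3 :=
  \matrix_(i < 3, j < 3)
    (if i == j then 1%R
     else if (i == 0 :> nat) && (j == 1 :> nat) then a
     else if (i == 0 :> nat) && (j == 2 :> nat) then b
     else if (i == 1 :> nat) && (j == 2 :> nat) then theta a
     else 0%R).

Definition Aset (F : finFieldType) (theta : F -> F) : {set {'GL_3[F]}} :=
  [set g : {'GL_3[F]} | [exists a : F, exists b : F, GLval g == Amat theta a b]].

Definition commx (gT : finGroupType) (x : gT) (G : {set gT}) : {set gT} :=
  (<<[set [~ x, g] | g in G]>>)%g.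

(* theta is a generator of Gal(F/F_2) when #|F| = 2^n: a field automorphism
   whose iterates theta^k, 0 < k < n, are all different from the identity
   (theta^n = id automatically, the Galois group being of order n). *)
Definition gal_generator (F : finFieldType) (n : nat) (theta : {rmorphism F -> F}) :=
  forall k, 0 < k < n -> exists a : F, iter k theta a != a.

(* Main.v *)
Require Import Defs.
From mathcomp Require Import all_boot all_order all_algebra all_fingroup all_solvable all_field.
From HB Require Import structures.
From mathcomp Require Import ring.
Set Implicit Arguments. Unset Strict Implicit. Unset Printing Implicit Defensive.
Import GRing.Theory.
Local Open Scope ring_scope.

Lemma theta_iter_id (F : finFieldType) (n : nat) (theta : {rmorphism F -> F}) :
  #|F| = (2 ^ n)%N -> forall v, iter n theta v = v.
Proof.
move=> HF.
have pc : 2 \in [pchar F] by apply: (card_finPcharP HF).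
pose L := pPrimeCharType pc.
pose f : L -> L := theta.
have fA : zmod_morphism f by move=> x y; rewrite /f rmorphB.
have fM : monoid_morphism f by split=> [|x y]; rewrite /f ?rmorph1 ?rmorphM.
have fZ : scalable f.
  by move=> a x; rewrite /f /= /pprimeChar_scale rmorphM rmorph_nat.
pose faM := GRing.isZmodMorphism.Build _ _ f fA.
pose fmM := GRing.isMonoidMorphism.Build _ _ f fM.
pose flM := GRing.isScalable.Build _ _ _ _ f fZ.
pose fLRM : {lrmorphism L -> L} := HB.pack f faM fmM flM.
have /kAut_to_gal[alpha galLalpha Dalpha]: kAut 1 {:L} (linfun fLRM).
  rewrite kAutfE; apply/kHomP_tmp; split=> [x /vlineP[a ->] | x y _ _]; rewrite !lfunE //=.
    by rewrite (fZ a 1) /f rmorph1.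
  exact: (rmorphM fLRM).
have {}Dalpha: alpha =1 f by move=> a; rewrite -Dalpha ?memvf ?lfunE.
have dimL : \dim {:L} = n.
  rewrite pprimeChar_dimf.
  by rewrite [#|_|]HF pfactorK.
have galL : galois 1 {:L} := finField_galois (sub1v _).
have cardG : #|('Gal({:L} / 1))%g| = n.
  by rewrite -(galois_dim galL) dimv1 divn1 dimL.
have an : (alpha ^+ n)%g = 1%g.
  apply/eqP; rewrite -order_dvdn -cardG; exact: order_dvdG.
have iterE k v : (alpha ^+ k)%g v = iter k theta v.
  elim: k => [|k IH]; first by rewrite expg0 gal_id.
  by rewrite expgSr galM ?memvf // IH Dalpha.
by move=> v; rewrite -iterE an gal_id.
Qed.
Lemma AmatM (F : finFieldType) (theta : {rmorphism F -> F}) a b c d :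
  (Amat theta a b * Amat theta c d = Amat theta (a + c) (b + d + a * theta c) :> 'M[F]_(2.+1)).
Proof.
apply/matrixP => i j; rewrite !mxE !big_ord_recr big_ord0 /= !mxE.
rewrite rmorphD.
case: i => [[|[|[|i]]] Hi] //; case: j => [[|[|[|j]]] Hj] //=; ring.
Qed.
Lemma Amat1 (F : finFieldType) (theta : {rmorphism F -> F}) :
  (Amat theta 0 0 = 1 :> 'M[F]_(2.+1)).
Proof.
apply/matrixP => i j; rewrite !mxE rmorph0.
by case: i => [[|[|[|i]]] Hi] //; case: j => [[|[|[|j]]] Hj].
Qed.

Lemma Amat_inj (F : finFieldType) (theta : {rmorphism F -> F}) a b a' b' :
  Amat theta a b = Amat theta a' b' -> a = a' /\ b = b'.
Proof.
move/matrixP => H; move: (H 0 1) (H 0 2); rewrite !mxE /=.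
by move=> -> ->.
Qed.

Lemma AmatV (F : finFieldType) (theta : {rmorphism F -> F}) (g : {'GL_3[F]}) c d :
  GLval g = Amat theta c d ->
  GLval (g^-1)%g = Amat theta (- c) (- d + c * theta c).
Proof.
move=> Hg.
have H1 : GLval g * Amat theta (- c) (- d + c * theta c) = 1.
  rewrite Hg AmatM -(Amat1 theta) rmorphN; congr (Amat _ _ _); ring.
by rewrite GL_VE -[RHS](mulKr (GL_unit g)) H1 mulr1.
Qed.

Local Close Scope ring_scope.
Theorem mainTheorem11 (F : finFieldType) (m : nat) (theta : {rmorphism F -> F})
  (x : {'GL_3[F]}) :
  let n := (2 * m).+1 in
  3 <= n ->
  #|F| = 2 ^ n ->
  gal_generator n theta ->
  x \in Aset theta ->
  #[x]%g = 4 ->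
  (x ^+ 2)%g \notin commx x (Aset theta) /\
  #[coset (commx x (Aset theta)) x]%g = 4.
Proof.
Local Open Scope ring_scope.
move=> n _ HF _ xA ox.
have pc : 2 \in [pchar F] by apply: (card_finPcharP HF).
have two0 : 2%:R = 0 :> F := pcharf0 pc.
have bb (e : F) : e + e = 0 by rewrite -mulr2n -mulr_natr two0 mulr0.
move: xA; rewrite inE => /existsP[a /existsP[b /eqP Hx]].
have x2E : GLval (x ^+ 2)%g = Amat theta 0 (a * theta a).
  by rewrite expgS expg1 GL_ME Hx AmatM bb bb add0r.
have a0 : a != 0.
  apply/negP => /eqP a0.
  have : (x ^+ 2)%g = 1%g.
    by apply: val_inj; change (GLval (x ^+ 2)%g = GLval 1%g); rewrite x2E a0 mul0r GL_1E -(Amat1 theta).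
  by move/eqP; rewrite -order_dvdn ox.
pose C := [set g : {'GL_3[F]} |
  [exists c, GLval g == Amat theta 0 (a * theta c - c * theta a)]].
have Cgrp : group_set C.
  apply/group_setP; split.
    rewrite inE; apply/existsP; exists 0; rewrite GL_1E rmorph0 mulr0 mul0r subrr.
    by rewrite Amat1.
  move=> g h; rewrite !inE => /existsP[c /eqP Hg] /existsP[c' /eqP Hh].
  apply/existsP; exists (c + c'); rewrite GL_ME Hg Hh AmatM.
  apply/eqP; congr (Amat _ _ _); rewrite ?rmorphD ?rmorph0; ring.
pose CG := Group Cgrp.
have HC : commx x (Aset theta) \subset C.
  rewrite /commx (gen_subG _ CG); apply/subsetP => k /imsetP[g].
  rewrite inE => /existsP[c /existsP[d /eqP Hg]] ->.
  rewrite inE; apply/existsP; exists c.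
  rewrite /commg /conjg !GL_ME (AmatV Hx) (AmatV Hg) Hx Hg !AmatM.
  apply/eqP; congr (Amat _ _ _); rewrite ?rmorphD ?rmorphN; ring.
have notin : (x ^+ 2)%g \notin commx x (Aset theta).
  apply/negP => /(subsetP HC); rewrite inE => /existsP[c /eqP].
  rewrite x2E => /Amat_inj[_ E].
  have ta0 : theta a != 0 by rewrite fmorph_eq0.
  pose u := c / a.
  have E' : theta c = (a * theta a + c * theta a) / a.
    by rewrite E; field.
  have tu : theta u = u + 1.
    rewrite /u fmorph_div E'; field; by rewrite a0 ta0.
  have itE k : iter k theta u = u + k%:R.
    elim: k => [|k IH]; first by rewrite addr0.
    rewrite iterS IH rmorphD tu rmorph_nat -natr1; ring.
  have := theta_iter_id theta HF u; rewrite itE => /eqP.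
  rewrite -subr_eq0 addrC addKr /n -addn1 natrD natrM two0 mul0r add0r.
  by rewrite oner_eq0.
set H := commx x (Aset theta).
have Ccent : C \subset 'C[x]%g.
  apply/subsetP => h; rewrite inE => /existsP[c /eqP Hh].
  apply/cent1P; apply: val_inj; change (GLval (h * x)%g = GLval (x * h)%g).
  rewrite !GL_ME Hh Hx !AmatM.
  congr (Amat _ _ _); rewrite ?rmorph0; ring.
have xN : x \in 'N(H)%g.
  apply: (subsetP (cent_sub H)); rewrite -sub_cent1; exact: subset_trans HC Ccent.
have d4 : (#[coset H x]%g %| 4)%N.
  by rewrite -ox; apply: (morph_order (coset_morphism H)).
have nd2 : ~~ (#[coset H x]%g %| 2)%N.
  rewrite order_dvdn -morphX //=; apply/negP => /eqP /(coset_idr (groupX 2 xN)).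
  by move=> H2; move/negP: notin; apply.
split; first exact: notin.
have := dvdn_leq (isT : (0 < 4)%N) d4; move: d4 nd2.
by case: #[_]%g => [|[|[|[|[|d]]]]].
Qed.
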